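(* $\mathcal{RD}_{\text{EGC*}}=\mathcal{RD}_{\text{EGC}}$.
   Context: Let $\mathcal{X}$ and $\hat{\mathcal{X}}$ be finite sets, $p_X$ a distribution on $\mathcal{X}$, $X$ a random variable with distribution $p_X$, and $d:\mathcal{X}\times\hat{\mathcal{X}}\to[0,\infty)$ a distortion measure. All auxiliary random variables below take values in finite sets. The EGC* region $\mathcal{RD}_{\text{EGC*}}$ is the convex closure of the set of quintuples $(R_1,R_2,D_{\{1\}},D_{\{2\}},D_{\{1,2\}})$ for which there exist auxiliary random variables $X_{\{1\}}$ and $X_{\{2\}}$, jointly distributed with $X$, and functions $\phi_{\{1\}},\phi_{\{2\}},\phi_{\{1,2\}}$ with values in $\hat{\mathcal{X}}$, such that $R_k\ge I(X;X_{\{k\}})$ for $k\in\{1,2\}$; $R_1+R_2\ge I(X;X_{\{1\}},X_{\{2\}})+I(X_{\{1\}};X_{\{2\}})$; $D_{\{k\}}\ge \mathbb{E}[d(X,\phi_{\{k\}}(X_{\{k\}}))]$ for $k\in\{1,2\}$; $D_{\{1,2\}}\ge\mathbb{E}[d(X,\phi_{\{1,2\}}(X_{\{1\}},X_{\{2\}}))]$. The EGC region $\mathcal{RD}_{\text{EGC}}$ is the convex closure of the set of quintuples $(R_1,R_2,D_{\{1\}},D_{\{2\}},D_{\{1,2\}})$ for which there exist random variables $X_{\{1\}},X_{\{2\}},X_{\{1,2\}}$ taking values in $\hat{\mathcal{X}}$, jointly distributed with $X$, such that $R_k\ge I(X;X_{\{k\}})$ for $k\in\{1,2\}$; $R_1+R_2\ge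 I(X;X_{\{1\}},X_{\{2\}},X_{\{1,2\}})+I(X_{\{1\}};X_{\{2\}})$; $D_{\mathcal{K}}\ge\mathbb{E}[d(X,X_{\mathcal{K}})]$ for $\mathcal{K}\in\{\{1\},\{2\},\{1,2\}\}$. *)

(* Defs.v *)
From mathcomp Require Import all_boot all_order all_algebra.
From mathcomp Require Import reals exp.
Set Implicit Arguments. Unset Strict Implicit. Unset Printing Implicit Defensive.
Import Order.TTheory GRing.Theory Num.Theory.
Local Open Scope ring_scope.

Definition is_pmf {R : realType} {T : finType} (P : T -> R) : Prop :=
  (forall t, 0 <= P t) /\ \sum_(t : T) P t = 1.

Definition mutinf {R : realType} {Om A B : finType} (P : Om -> R)
  (f : Om -> A) (g : Om -> B) : R :=
  \sum_(a : A) \sum_(b : B)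
    let pab := \sum_(w | (f w == a) && (g w == b)) P w in
    let pa := \sum_(w | f w == a) P w in
    let pb := \sum_(w | g w == b) P w in
    if pab == 0 then 0 else pab * ln (pab / (pa * pb)).

Definition expect {R : realType} {Om : finType} (P : Om -> R) (h : Om -> R) : R :=
  \sum_(w : Om) P w * h w.

Definition has_law {R : realType} {Om T : finType} (P : Om -> R) (Xv : Om -> T)
  (pX : T -> R) : Prop :=
  forall x, \sum_(w | Xv w == x) P w = pX x.

(* quintuples (R1,R2,D{1},D{2},D{1,2}) are row vectors of size 5 *)
Definition coord {R : realType} (r : 'rV[R]_5) (k : nat) : R := r ord0 (inord k).

Definition EGCstar_pre {R : realType} {X Xh : finType} (pX : X -> R)
  (d : X -> Xh -> R) (r : 'rV[R]_5) : Prop :=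
  exists (Om U1 U2 : finType) (P : Om -> R) (Xv : Om -> X)
         (X1 : Om -> U1) (X2 : Om -> U2)
         (phi1 : U1 -> Xh) (phi2 : U2 -> Xh) (phi12 : U1 -> U2 -> Xh),
    [/\ is_pmf P, has_law P Xv pX,
        [/\ coord r 0 >= mutinf P Xv X1,
            coord r 1 >= mutinf P Xv X2 &
            coord r 0 + coord r 1 >=
              mutinf P Xv (fun w => (X1 w, X2 w)) + mutinf P X1 X2] &
        [/\ coord r 2 >= expect P (fun w => d (Xv w) (phi1 (X1 w))),
            coord r 3 >= expect P (fun w => d (Xv w) (phi2 (X2 w))) &
            coord r 4 >= expect P (fun w => d (Xv w) (phi12 (X1 w) (X2 w)))]].

Definition EGC_pre {R : realType} {X Xh : finType} (pX : X -> R)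
  (d : X -> Xh -> R) (r : 'rV[R]_5) : Prop :=
  exists (Om : finType) (P : Om -> R) (Xv : Om -> X)
         (X1 X2 X12 : Om -> Xh),
    [/\ is_pmf P, has_law P Xv pX,
        [/\ coord r 0 >= mutinf P Xv X1,
            coord r 1 >= mutinf P Xv X2 &
            coord r 0 + coord r 1 >=
              mutinf P Xv (fun w => (X1 w, X2 w, X12 w)) + mutinf P X1 X2] &
        [/\ coord r 2 >= expect P (fun w => d (Xv w) (X1 w)),
            coord r 3 >= expect P (fun w => d (Xv w) (X2 w)) &
            coord r 4 >= expect P (fun w => d (Xv w) (X12 w))]].

Definition conv_hull {R : realType} (S : 'rV[R]_5 -> Prop) (r : 'rV[R]_5) : Prop :=
  exists (n : nat) (w : 'I_n -> R) (v : 'I_n -> 'rV[R]_5),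
    [/\ forall i, 0 <= w i, \sum_i w i = 1, forall i, S (v i) &
        r = \sum_i w i *: v i].

Definition conv_closure {R : realType} (S : 'rV[R]_5 -> Prop) (r : 'rV[R]_5) : Prop :=
  forall eps : R, 0 < eps ->
    exists y, conv_hull S y /\ forall k : 'I_5, `|r ord0 k - y ord0 k| < eps.

Definition RD_EGCstar {R : realType} {X Xh : finType} (pX : X -> R)
  (d : X -> Xh -> R) := conv_closure (EGCstar_pre pX d).
Definition RD_EGC {R : realType} {X Xh : finType} (pX : X -> R)
  (d : X -> Xh -> R) := conv_closure (EGC_pre pX d).

(* Main.v *)
Require Import Defs.
From mathcomp Require Import all_boot all_order all_algebra.
From mathcomp Require Import reals exp.
From mathcomp Require Import ring lra.
Import Order.TTheory GRing.Theory Num.Theory.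
Local Open Scope ring_scope.

Section Info.
Context {R : realType}.

Definition law {Om T : finType} (P : Om -> R) (f : Om -> T) (y : T) : R :=
  \sum_(w | f w == y) P w.
Definition ent {Om T : finType} (P : Om -> R) (f : Om -> T) : R :=
  - \sum_y law P f y * ln (law P f y).

Lemma sum_partition {Om T : finType} (f : Om -> T) (F : Om -> T -> R) :
  \sum_y \sum_(w | f w == y) F w y = \sum_w F w (f w).
Proof.
under eq_bigr do rewrite big_mkcond.
rewrite exchange_big; apply: eq_bigr => w _ /=.
rewrite -big_mkcond /= (big_pred1 (f w)) // => y /=; exact: eq_sym.
Qed.

Lemma entE {Om T : finType} (P : Om -> R) (f : Om -> T) :
  ent P f = - \sum_w P w * ln (law P f (f w)).
Proof.
rewrite /ent; congr (- _).
rewrite -(sum_partition f (fun w y => P w * ln (law P f y))).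
by apply: eq_bigr => y _; rewrite /law big_distrl.
Qed.

Lemma law_ge {Om T : finType} (P : Om -> R) (f : Om -> T) w :
  (forall w, 0 <= P w) -> P w <= law P f (f w).
Proof.
move=> P0; rewrite /law (bigD1 w) //= lerDl sumr_ge0 // => ? _; exact: P0.
Qed.

Lemma law_ge0 {Om T : finType} (P : Om -> R) (f : Om -> T) y :
  (forall w, 0 <= P w) -> 0 <= law P f y.
Proof. by move=> P0; rewrite /law sumr_ge0. Qed.

Lemma law_sum {Om T : finType} (P : Om -> R) (f : Om -> T) :
  \sum_y law P f y = \sum_w P w.
Proof. exact: (sum_partition f (fun w _ => P w)). Qed.

Lemma ent_eq {Om T T' : finType} (P : Om -> R) (f : Om -> T) (g : Om -> T') :
  (forall w w', P w != 0 -> P w' != 0 -> (f w == f w') = (g w == g w')) ->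
  ent P f = ent P g.
Proof.
move=> H; rewrite !entE; congr (- _); apply: eq_bigr => w _.
have [->|Pw] := eqVneq (P w) 0; first by rewrite !mul0r.
congr (_ * ln _); rewrite /law [LHS]big_mkcond [RHS]big_mkcond.
apply: eq_bigr => w' _.
have [->|Pw'] := eqVneq (P w') 0; first by rewrite !if_same.
by rewrite (H w' w Pw' Pw).
Qed.

Lemma marg1 {Om A B : finType} (P : Om -> R) (f : Om -> A) (g : Om -> B) a :
  \sum_b \sum_(w | (f w == a) && (g w == b)) P w = \sum_(w | f w == a) P w.
Proof.
under eq_bigr do rewrite big_andbC big_mkcondr.
rewrite (sum_partition g (fun w _ => if f w == a then P w else 0)).
by rewrite -big_mkcond.
Qed.

Lemma marg2 {Om A B : finType} (P : Om -> R) (f : Om -> A) (g : Om -> B) b :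
  \sum_a \sum_(w | (f w == a) && (g w == b)) P w = \sum_(w | g w == b) P w.
Proof.
under eq_bigr do rewrite big_mkcondr.
rewrite (sum_partition f (fun w _ => if g w == b then P w else 0)).
by rewrite -big_mkcond.
Qed.

Lemma law_pair {Om A B : finType} (P : Om -> R) (f : Om -> A) (g : Om -> B) a b :
  law P (fun w => (f w, g w)) (a, b) = \sum_(w | (f w == a) && (g w == b)) P w.
Proof. by apply: eq_bigl => w; rewrite xpair_eqE. Qed.

Lemma mutinfE {Om A B : finType} (P : Om -> R) (f : Om -> A) (g : Om -> B) :
  (forall w, 0 <= P w) ->
  mutinf P f g = ent P f + ent P g - ent P (fun w => (f w, g w)).
Proof.
move=> P0.
have step : forall a b,
  (let pab := \sum_(w | (f w == a) && (g w == b)) P w in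
   let pa := \sum_(w | f w == a) P w in
   let pb := \sum_(w | g w == b) P w in
   if pab == 0 then 0 else pab * ln (pab / (pa * pb))) =
  law P (fun w => (f w, g w)) (a, b) * ln (law P (fun w => (f w, g w)) (a, b))
  - (\sum_(w | (f w == a) && (g w == b)) P w) * ln (law P f a)
  - (\sum_(w | (f w == a) && (g w == b)) P w) * ln (law P g b).
  move=> a b /=; rewrite law_pair /law.
  set pab := \sum_(w | _ && _) P w.
  set pa := \sum_(w | f w == a) P w.
  set pb := \sum_(w | g w == b) P w.
  have [->|pab0] := eqVneq pab 0; first by rewrite !mul0r subrr subr0.
  have pabp : 0 < pab by rewrite lt0r pab0 sumr_ge0.
  have pale : pab <= pa.
    rewrite /pab /pa [leRHS]big_mkcond [leLHS]big_mkcond ler_sum // => w _.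
    by case: (f w == a) => //=; case: (g w == b).
  have pble : pab <= pb.
    rewrite /pab /pb [leRHS]big_mkcond [leLHS]big_mkcond ler_sum // => w _.
    by case: (f w == a) => //=; case: (g w == b) => //=.
  have pap : 0 < pa by apply: lt_le_trans pale.
  have pbp : 0 < pb by apply: lt_le_trans pble.
  rewrite ln_div ?posrE ?mulr_gt0 // lnM ?posrE //.
  ring.
rewrite /mutinf (eq_bigr _ (fun a _ => eq_bigr _ (fun b _ => step a b))).
under eq_bigr do rewrite !sumrB.
rewrite !sumrB.
have -> : \sum_a \sum_b law P (fun w => (f w, g w)) (a, b) *
     ln (law P (fun w => (f w, g w)) (a, b)) =
   \sum_p law P (fun w => (f w, g w)) p * ln (law P (fun w => (f w, g w)) p).
  by rewrite pair_big; apply: eq_bigr => -[a b].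
have -> : \sum_a \sum_b (\sum_(w | (f w == a) && (g w == b)) P w) * ln (law P f a)
   = \sum_a law P f a * ln (law P f a).
  by apply: eq_bigr => a _; rewrite -big_distrl marg1.
have -> : \sum_a \sum_b (\sum_(w | (f w == a) && (g w == b)) P w) * ln (law P g b)
   = \sum_b law P g b * ln (law P g b).
  by rewrite exchange_big; apply: eq_bigr => b _; rewrite -big_distrl marg2.
rewrite /ent; ring.
Qed.

Lemma sum_law {Om T : finType} (P : Om -> R) (f : Om -> T) (F : T -> R) :
  \sum_w P w * F (f w) = \sum_y law P f y * F y.
Proof.
rewrite -(sum_partition f (fun w y => P w * F y)).
by apply: eq_bigr => y _; rewrite /law big_distrl.
Qed.

Lemma law_marg2 {Om A C : finType} (P : Om -> R) (a : Om -> A) (c : Om -> C) z :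
  \sum_x law P (fun w => (a w, c w)) (x, z) = law P c z.
Proof. by under eq_bigr do rewrite law_pair; rewrite marg2. Qed.

Lemma law_marg1 {Om A C : finType} (P : Om -> R) (a : Om -> A) (c : Om -> C) x :
  \sum_z law P (fun w => (a w, c w)) (x, z) = law P a x.
Proof. by under eq_bigr do rewrite law_pair; rewrite marg1. Qed.

Lemma gibbs {Om : finType} (P : Om -> R) (s t : Om -> R) :
  (forall w, 0 <= P w) -> \sum_w P w = 1 ->
  (forall w, P w != 0 -> 0 < s w /\ 0 < t w) ->
  \sum_w P w * (t w / s w) <= 1 ->
  \sum_w P w * ln (t w) <= \sum_w P w * ln (s w).
Proof.
move=> P0 P1 Hst Hs; rewrite -subr_le0 -sumrB.
apply: (@le_trans _ _ (\sum_w P w * (t w / s w - 1))).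
  apply: ler_sum => w _.
  have [->|Pw] := eqVneq (P w) 0; first by rewrite !mul0r subrr.
  have [sp tp] := Hst w Pw.
  rewrite -mulrBr ler_wpM2l // -ln_div ?posrE //.
  have := @le_ln1Dx R (t w / s w - 1); rewrite addrCA subrr addr0; apply.
  by rewrite ltrBrDl subrr divr_gt0.
by rewrite (eq_bigr (fun w => P w * (t w / s w) - P w)) ?sumrB ?P1 ?subr_le0 //
  => w _; rewrite mulrBr mulr1.
Qed.

Lemma submod {Om A B C : finType} (P : Om -> R) (a : Om -> A) (b : Om -> B)
  (c : Om -> C) : (forall w, 0 <= P w) -> \sum_w P w = 1 ->
  ent P (fun w => (a w, b w, c w)) + ent P c <=
  ent P (fun w => (a w, c w)) + ent P (fun w => (b w, c w)).
Proof.
move=> P0 P1.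
set pabc := law P (fun w => (a w, b w, c w)).
set pac := law P (fun w => (a w, c w)).
set pbc := law P (fun w => (b w, c w)).
set pc := law P c.
have pos : forall w, P w != 0 -> [/\ 0 < pabc (a w, b w, c w),
   0 < pac (a w, c w), 0 < pbc (b w, c w) & 0 < pc (c w)].
  move=> w Pw; have Pwp : 0 < P w by rewrite lt0r Pw P0.
  split; apply: (lt_le_trans Pwp); exact: (law_ge _ _ _ P0).
rewrite !entE -!opprD lerN2 -!big_split /=.
rewrite (eq_bigr (fun w => P w * ln (pac (a w, c w) * pbc (b w, c w)))); last first.
  move=> w _; have [->|Pw] := eqVneq (P w) 0; first by rewrite !mul0r addr0.
  by have [h1 h2 h3 h4] := pos w Pw; rewrite lnM ?posrE // mulrDr.
rewrite [X in _ <= X](eq_bigr (fun w => P w * ln (pabc (a w, b w, c w) * pc (c w)))); last first.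
  move=> w _; have [->|Pw] := eqVneq (P w) 0; first by rewrite !mul0r addr0.
  by have [h1 h2 h3 h4] := pos w Pw; rewrite lnM ?posrE // mulrDr.
apply: gibbs => //.
  by move=> w Pw; have [h1 h2 h3 h4] := pos w Pw; split; apply: mulr_gt0.
rewrite (sum_law P (fun w => (a w, b w, c w))
  (fun y => pac (y.1.1, y.2) * pbc (y.1.2, y.2) / (pabc y * pc y.2))).
apply: (@le_trans _ _ (\sum_y pac (y.1.1, y.2) * pbc (y.1.2, y.2) / pc y.2)).
  apply: ler_sum => y _; rewrite -/pabc.
  have [->|py] := eqVneq (pabc y) 0.
    by rewrite mul0r divr_ge0 ?mulr_ge0 ?law_ge0.
  by rewrite invfM mulrCA (mulrA (pabc y)) divff // mul1r.
set G := fun y : (A * B) * C => pac (y.1.1, y.2) * pbc (y.1.2, y.2) / pc y.2.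
have -> : \sum_y G y = \sum_z \sum_x \sum_u G (x, u, z).
  rewrite -(pair_bigA _ (fun ab z => G (ab, z))) exchange_big /=.
  by apply: eq_bigr => z _; rewrite -(pair_bigA _ (fun x u => G (x, u, z))).
rewrite /G /=.
rewrite -P1 -(law_sum P c); apply: ler_sum => z _.
under eq_bigr do under eq_bigr do rewrite mulrAC.
under eq_bigr do rewrite -big_distrr /= law_marg2.
rewrite -!big_distrl /= /pac law_marg2 /pc.
have [->|pz] := eqVneq (law P c z) 0; first by rewrite mulr0.
by rewrite divff // mul1r.
Qed.


Lemma ent_const {Om : finType} (P : Om -> R) : \sum_w P w = 1 ->
  ent P (fun _ => tt) = 0.
Proof.
move=> P1; rewrite /ent (big_pred1 tt); last by case.
rewrite /law.
by rewrite (eq_bigl xpredT) // P1 ln1 mulr0 oppr0.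
Qed.

Lemma subadd {Om A B : finType} (P : Om -> R) (a : Om -> A) (b : Om -> B) :
  (forall w, 0 <= P w) -> \sum_w P w = 1 ->
  ent P (fun w => (a w, b w)) <= ent P a + ent P b.
Proof.
move=> P0 P1; have := submod P a b (fun _ => tt) P0 P1.
rewrite ent_const // addr0.
rewrite (@ent_eq _ _ _ P (fun w => (a w, b w, tt)) (fun w => (a w, b w))); last first.
  by move=> w w' _ _; rewrite !xpair_eqE eqxx andbT.
rewrite (@ent_eq _ _ _ P (fun w => (a w, tt)) a); last first.
  by move=> w w' _ _; rewrite !xpair_eqE eqxx andbT.
rewrite (@ent_eq _ _ _ P (fun w => (b w, tt)) b) //.
by move=> w w' _ _; rewrite !xpair_eqE eqxx andbT.
Qed.

Lemma ent_swap {Om A B : finType} (P : Om -> R) (a : Om -> A) (b : Om -> B) :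
  ent P (fun w => (a w, b w)) = ent P (fun w => (b w, a w)).
Proof. by apply: ent_eq => w w' _ _; rewrite !xpair_eqE andbC. Qed.

Lemma mutinf_sym {Om A B : finType} (P : Om -> R) (a : Om -> A) (b : Om -> B) :
  (forall w, 0 <= P w) -> mutinf P a b = mutinf P b a.
Proof. by move=> P0; rewrite !mutinfE // (ent_swap P a b); ring. Qed.

Lemma dproc {Om A B C : finType} (P : Om -> R) (a : Om -> A) (b : Om -> B)
  (u : B -> C) : (forall w, 0 <= P w) -> \sum_w P w = 1 ->
  mutinf P a (fun w => u (b w)) <= mutinf P a b.
Proof.
move=> P0 P1; rewrite !mutinfE //.
have := submod P a b (fun w => u (b w)) P0 P1.
rewrite (@ent_eq _ _ _ P (fun w => (a w, b w, u (b w))) (fun w => (a w, b w))); last first.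
  move=> w w' _ _; rewrite !xpair_eqE; case: eqP => //= _; case: eqP => //= ->.
  by rewrite eqxx.
rewrite (@ent_eq _ _ _ P (fun w => (b w, u (b w))) b); last first.
  by move=> w w' _ _; rewrite !xpair_eqE; case: eqP => //= ->; rewrite eqxx.
move=> h; lra.
Qed.

Lemma dproc2 {Om A B C D : finType} (P : Om -> R) (a : Om -> A) (b : Om -> B)
  (u : A -> C) (v : B -> D) : (forall w, 0 <= P w) -> \sum_w P w = 1 ->
  mutinf P (fun w => u (a w)) (fun w => v (b w)) <= mutinf P a b.
Proof.
move=> P0 P1; apply: le_trans (dproc _ _ _ _ P0 P1) _.
rewrite mutinf_sym // (mutinf_sym _ a) //; exact: dproc.
Qed.

Lemma corner {Om A B C : finType} (P : Om -> R) (x : Om -> A) (y1 : Om -> B)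
  (y2 : Om -> C) : (forall w, 0 <= P w) -> \sum_w P w = 1 ->
  mutinf P x y1 + mutinf P x y2 <=
  mutinf P x (fun w => (y1 w, y2 w)) + mutinf P y1 y2.
Proof.
move=> P0 P1; rewrite !mutinfE //.
have := submod P y1 y2 x P0 P1.
rewrite (@ent_eq _ _ _ P (fun w => (y1 w, y2 w, x w)) (fun w => (x w, (y1 w, y2 w)))); last first.
  by move=> w w' _ _; rewrite !xpair_eqE andbC.
rewrite (ent_swap _ y1) (ent_swap _ y2) => h; lra.
Qed.

End Info.

Lemma star_to_egc (R : realType) (X Xh : finType) (pX : X -> R)
  (d : X -> Xh -> R) r : EGCstar_pre pX d r -> EGC_pre pX d r.
Proof.
case=> Om [U1 [U2 [P [Xv [X1 [X2 [phi1 [phi2 [phi12 [[P0 P1] hl [h0 h1 h2] [h3 h4 h5]]]]]]]]]]].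
exists Om, P, Xv, (fun w => phi1 (X1 w)), (fun w => phi2 (X2 w)),
  (fun w => phi12 (X1 w) (X2 w)).
split => //; split.
- by apply: le_trans h0; exact: (dproc P Xv X1 phi1 P0 P1).
- by apply: le_trans h1; exact: (dproc P Xv X2 phi2 P0 P1).
- apply: le_trans h2; apply: lerD.
  + exact: (dproc P Xv (fun w => (X1 w, X2 w))
      (fun p => (phi1 p.1, phi2 p.2, phi12 p.1 p.2)) P0 P1).
  + exact: (dproc2 P X1 X2 phi1 phi2 P0 P1).
Qed.

Section Kern.
Context {R : realType} {Om Cty V : finType}.
Variables (P : Om -> R) (kap : Cty -> V -> R) (C : Om -> Cty).
Hypothesis P0 : forall w, 0 <= P w.
Hypothesis kap0 : forall c v, 0 <= kap c v.
Hypothesis kap1 : forall c, \sum_v kap c v = 1.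

Definition Pk (p : Om * V) := P p.1 * kap (C p.1) p.2.

Lemma sumOV (F : Om * V -> R) : \sum_p F p = \sum_w \sum_v F (w, v).
Proof. by rewrite pair_bigA; apply: eq_bigr => -[w v]. Qed.

Lemma Pk0 p : 0 <= Pk p.
Proof. by rewrite mulr_ge0. Qed.

Lemma Pk_marg w : \sum_v Pk (w, v) = P w.
Proof. by rewrite /Pk /= -big_distrr /= kap1 mulr1. Qed.

Lemma Pk_expect (h : Om -> R) : \sum_p Pk p * h p.1 = \sum_w P w * h w.
Proof.
rewrite sumOV; apply: eq_bigr => w _ /=.
by rewrite -big_distrl /= Pk_marg.
Qed.

Lemma Pk_law {T : finType} (F : Om -> T) y :
  law Pk (fun p => F p.1) y = law P F y.
Proof.
rewrite /law big_mkcond sumOV [RHS]big_mkcond; apply: eq_bigr => w _ /=.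
by case: (F w == y); rewrite ?Pk_marg // big1.
Qed.

Lemma Pk_ent {T : finType} (F : Om -> T) :
  ent Pk (fun p => F p.1) = ent P F.
Proof.
rewrite !entE; congr (- _).
under eq_bigr do rewrite Pk_law.
exact: (Pk_expect (fun w => ln (law P F (F w)))).
Qed.

Lemma Pk_markov {T : finType} (F : Om -> T) (h : T -> Cty) :
  (forall w, C w = h (F w)) ->
  ent Pk (fun p => (F p.1, p.2)) =
  ent P F - \sum_w P w * (\sum_v kap (C w) v * ln (kap (C w) v)).
Proof.
move=> hC.
have L : forall y v, law Pk (fun p => (F p.1, p.2)) (y, v) = law P F y * kap (h y) v.
  move=> y v; rewrite /law big_mkcond sumOV big_distrl /= [RHS]big_mkcond.
  apply: eq_bigr => w _ /=.
  rewrite (bigD1 v) //= big1 => [|v' nv']; last first.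
    by rewrite xpair_eqE (negbTE nv') andbF.
  rewrite addr0 xpair_eqE eqxx andbT; case: eqP => [<-|_]; last by [].
  by rewrite /Pk /= hC.
rewrite !entE -opprB opprK addrC; congr (- _).
have -> : \sum_w P w * (\sum_v kap (C w) v * ln (kap (C w) v)) =
          \sum_p Pk p * ln (kap (C p.1) p.2).
  rewrite sumOV; apply: eq_bigr => w _; rewrite big_distrr; apply: eq_bigr => v _.
  by rewrite /Pk /= mulrA.
rewrite -(Pk_expect (fun w => ln (law P F (F w)))) -big_split /=.
apply: eq_bigr => -[w v] _ /=; rewrite L -hC.
have [->|Pkn] := eqVneq (Pk (w, v)) 0; first by rewrite !mul0r addr0.
have Pw : 0 < P w.
  rewrite lt0r P0 andbT; apply: contraNneq Pkn => Pw0.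
  by rewrite /Pk /= Pw0 mul0r.
have kp : 0 < kap (C w) v.
  rewrite lt0r kap0 andbT; apply: contraNneq Pkn => k0.
  by rewrite /Pk /= k0 mulr0.
have lp : 0 < law P F (F w) by apply: lt_le_trans Pw (law_ge _ _ _ P0).
by rewrite lnM ?posrE // mulrDr addrC.
Qed.

End Kern.

Lemma ent_indep (R : realType) (Om A B : finType) (Q : Om -> R) (f : Om -> A)
  (g : Om -> B) : (forall w, 0 <= Q w) ->
  (forall y z, law Q (fun w => (f w, g w)) (y, z) = law Q f y * law Q g z) ->
  ent Q (fun w => (f w, g w)) = ent Q f + ent Q g.
Proof.
move=> Q0 L; rewrite !entE -opprD; congr (- _); rewrite -big_split /=.
apply: eq_bigr => w _; rewrite L.
have [->|Qw] := eqVneq (Q w) 0; first by rewrite !mul0r addr0.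
have Qp : 0 < Q w by rewrite lt0r Qw Q0.
have l1 : 0 < law Q f (f w) by apply: lt_le_trans Qp (law_ge _ _ _ Q0).
have l2 : 0 < law Q g (g w) by apply: lt_le_trans Qp (law_ge _ _ _ Q0).
by rewrite lnM ?posrE // mulrDr.
Qed.

Section Constr.
Variables (R : realType) (X Xh Om : finType).
Variables (P : Om -> R) (Xv : Om -> X) (A1 A2 B : Om -> Xh) (b0 : Xh).
Hypothesis P0 : forall w, 0 <= P w.
Hypothesis P1 : \sum_w P w = 1.

Local Notation T := (Xh * Xh)%type.
Local Notation V := {ffun T -> Xh}.

Definition Cw (w : Om) : T * Xh := (A1 w, A2 w, B w).
Definition pA (a : T) := law P (fun w => (A1 w, A2 w)) a.
Definition pAB (c : T * Xh) := law P Cw c.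
Definition qk (a : T) (y : Xh) : R :=
  if pA a == 0 then (y == b0)%:R else pAB (a, y) / pA a.
Definition kap (c : T * Xh) (v : V) : R :=
  \prod_a (if a == c.1 then (v a == c.2)%:R else qk a (v a)).

Lemma pA0 a : 0 <= pA a. Proof. exact: law_ge0. Qed.
Lemma pAB0 c : 0 <= pAB c. Proof. exact: law_ge0. Qed.

Lemma pAB_marg a : \sum_y pAB (a, y) = pA a.
Proof. exact: (law_marg1 P (fun w => (A1 w, A2 w)) B a). Qed.

Lemma pAB_le a y : pAB (a, y) <= pA a.
Proof.
rewrite -pAB_marg (bigD1 y) //= lerDl sumr_ge0 // => *; exact: pAB0.
Qed.

Lemma qk0 a y : 0 <= qk a y.
Proof. by rewrite /qk; case: ifP => _; rewrite ?ler0n ?divr_ge0 ?pAB0 ?pA0. Qed.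

Lemma sum_ind (y0 : Xh) : \sum_y ((y == y0)%:R : R) = 1.
Proof.
by rewrite (bigD1 y0) //= eqxx big1 ?addr0 // => y /negbTE ->.
Qed.

Lemma qk1 a : \sum_y qk a y = 1.
Proof.
rewrite /qk; case: eqP => [_|/eqP pa]; first exact: sum_ind.
by rewrite -big_distrl /= pAB_marg divff.
Qed.

Lemma kap0 c v : 0 <= kap c v.
Proof.
by apply: prodr_ge0 => a _; case: ifP => _; rewrite ?ler0n ?qk0.
Qed.

Lemma kap1 c : \sum_v kap c v = 1.
Proof.
rewrite /kap.
have := @bigA_distr_bigA R 0 1 *%R +%R _ _ (fun a y => if a == c.1 then (y == c.2)%:R else qk a y).
move=> <-; apply: big1 => a _; case: (a == c.1); [exact: sum_ind | exact: qk1].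
Qed.

Definition P' := Pk P kap Cw.

Lemma P'0 p : 0 <= P' p. Proof. exact: Pk0 P0 kap0 p. Qed.

Lemma P'1 : \sum_p P' p = 1.
Proof.
rewrite sumOV -P1; apply: eq_bigr => w _; apply: Pk_marg; exact: kap1.
Qed.

Lemma supp p : P' p != 0 -> p.2 (A1 p.1, A2 p.1) = B p.1.
Proof.
case: p => w v /=; apply: contraNeq => ne.
rewrite /P' /Pk /= /kap (bigD1 (A1 w, A2 w)) //= eqxx /=.
by rewrite (negbTE ne) mul0r mulr0.
Qed.

Definition rho (v : V) := \prod_a qk a (v a).

Lemma law_Av a v :
  law P' (fun p => ((A1 p.1, A2 p.1), p.2)) (a, v) = pA a * rho v.
Proof.
rewrite /law big_mkcond sumOV.
rewrite (eq_bigr (fun w => if (A1 w, A2 w) == a then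
    P w * ((v a == B w)%:R * \prod_(a' | a' != a) qk a' (v a')) else 0)); last first.
  move=> w _; rewrite (bigD1 v) //= big1 => [|v' nv']; last first.
    by rewrite xpair_eqE (negbTE nv') andbF.
  rewrite addr0 xpair_eqE eqxx andbT; case: eqP => // Aw.
  rewrite /P' /Pk /= /kap (bigD1 a) //= -Aw eqxx /=; congr (_ * (_ * _)).
  by apply: eq_bigr => a' /negbTE ->.
rewrite -big_mkcond /=.
under eq_bigr do rewrite mulrA.
rewrite -big_distrl /=.
have -> : \sum_(w | (A1 w, A2 w) == a) P w * (v a == B w)%:R = pAB (a, v a).
  rewrite /pAB /law big_mkcond [RHS]big_mkcond; apply: eq_bigr => w _.
  rewrite /Cw xpair_eqE (eq_sym (B w)).
  by case: ((A1 w, A2 w) == a); case: (v a == B w); rewrite ?mulr1 ?mulr0.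
rewrite /rho [in RHS](bigD1 a) //= mulrA; congr (_ * _).
rewrite /qk; have [pa0|pa] := eqVneq (pA a) 0.
  by rewrite pa0 mul0r; apply/eqP; rewrite eq_le pAB0 andbT -pa0 pAB_le.
by rewrite mulrCA divff ?mulr1.
Qed.

Lemma law_snd v : law P' (fun p => p.2) v = rho v.
Proof.
rewrite -(law_marg2 P' (fun p => (A1 p.1, A2 p.1)) (fun p => p.2) v).
under eq_bigr do rewrite law_Av.
by rewrite -big_distrl /= /pA law_sum P1 mul1r.
Qed.


Lemma P'_law {Ty : finType} (F : Om -> Ty) y :
  law P' (fun p => F p.1) y = law P F y.
Proof. apply: Pk_law; exact: kap1. Qed.

Lemma P'_ent {Ty : finType} (F : Om -> Ty) :
  ent P' (fun p => F p.1) = ent P F.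
Proof. apply: Pk_ent; exact: kap1. Qed.

Lemma P'_exp (h : Om -> R) : \sum_p P' p * h p.1 = \sum_w P w * h w.
Proof. apply: Pk_expect; exact: kap1. Qed.

Definition Kc := \sum_w P w * (\sum_v kap (Cw w) v * ln (kap (Cw w) v)).

Lemma P'_markov {Ty : finType} (F : Om -> Ty) (h : Ty -> T * Xh) :
  (forall w, Cw w = h (F w)) ->
  ent P' (fun p => (F p.1, p.2)) = ent P F - Kc.
Proof. move=> hC; apply: Pk_markov => //; [exact: kap0 | exact: kap1]. Qed.

Lemma ent_Av : ent P' (fun p => ((A1 p.1, A2 p.1), p.2)) =
  ent P (fun w => (A1 w, A2 w)) + ent P' (fun p => p.2).
Proof.
rewrite (@ent_indep _ _ _ _ P' (fun p => (A1 p.1, A2 p.1)) (fun p => p.2)); first by congr (_ + _); exact: (P'_ent (fun w => (A1 w, A2 w))).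
  exact: P'0.
move=> y z; rewrite law_Av law_snd; congr (_ * _).
symmetry; exact: (P'_law (fun w => (A1 w, A2 w))).
Qed.

Lemma e4 : ent P' (fun p => (Xv p.1, (A1 p.1, (A2 p.1, p.2)))) =
  ent P (fun w => (Xv w, (A1 w, A2 w, B w))) - Kc.
Proof.
rewrite -(P'_markov (fun w => (Xv w, (A1 w, A2 w, B w))) (fun y => y.2)) //.
apply: ent_eq => -[w v] [w' v'] /supp /= s /supp /= s'.
apply/idP/idP => /eqP H; apply/eqP; move: H.
  by rewrite -s -s'; case=> -> -> -> ->.
by rewrite -s -s'; case=> -> -> -> _ ->.
Qed.

Lemma e5 : ent P' (fun p => (A1 p.1, (A2 p.1, p.2))) =
  ent P (fun w => (A1 w, A2 w)) + ent P' (fun p => p.2).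
Proof.
rewrite -ent_Av; apply: ent_eq => -[w v] [w' v'] _ _ /=.
apply/idP/idP => /eqP H; apply/eqP; move: H.
  by case=> -> -> ->.
by case=> -> -> ->.
Qed.

Lemma e6 : ent P (fun w => (A1 w, A2 w, B w)) - Kc =
  ent P (fun w => (A1 w, A2 w)) + ent P' (fun p => p.2).
Proof.
rewrite -(P'_markov (fun w => (A1 w, A2 w, B w)) id) // -ent_Av.
apply: ent_eq => -[w v] [w' v'] /supp /= s /supp /= s'.
apply/idP/idP => /eqP H; apply/eqP; move: H.
  by case=> -> -> _ ->.
by rewrite -s -s'; case=> -> -> ->.
Qed.

Lemma key_ineq :
  mutinf P' (fun p => Xv p.1) (fun p => (A1 p.1, (A2 p.1, p.2))) +
  mutinf P' (fun p => A1 p.1) (fun p => (A2 p.1, p.2)) <=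
  mutinf P Xv (fun w => (A1 w, A2 w, B w)) + mutinf P A1 A2.
Proof.
rewrite !mutinfE //; last exact: P'0; last exact: P'0.
rewrite e4 e5 (P'_ent Xv) (P'_ent A1).
have h3 := subadd P' (fun p => A2 p.1) (fun p => p.2) P'0 P'1.
rewrite (P'_ent A2) in h3.
have := e6; lra.
Qed.


Lemma witness (pX : X -> R) (d : X -> Xh -> R) (hl : has_law P Xv pX)
  (q : 'rV[R]_5) :
  Defs.coord q 0 >= mutinf P Xv A1 ->
  Defs.coord q 1 >= mutinf P Xv (fun w => (A1 w, A2 w, B w)) + mutinf P A1 A2
               - mutinf P Xv A1 ->
  Defs.coord q 2 >= expect P (fun w => d (Xv w) (A1 w)) ->
  Defs.coord q 3 >= expect P (fun w => d (Xv w) (A2 w)) ->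
  Defs.coord q 4 >= expect P (fun w => d (Xv w) (B w)) ->
  EGCstar_pre pX d q.
Proof.
move=> h0 h1 h2 h3 h4.
have ma : mutinf P' (fun p => Xv p.1) (fun p => A1 p.1) = mutinf P Xv A1.
  rewrite !mutinfE //; last exact: P'0.
  rewrite (P'_ent Xv) (P'_ent A1); congr (_ - _).
  exact: (P'_ent (fun w => (Xv w, A1 w))).
have co := corner P' (fun p => Xv p.1) (fun p => A1 p.1)
  (fun p => (A2 p.1, p.2)) P'0 P'1.
have ki := key_ineq.
exists (Om * V)%type, Xh, (Xh * V)%type, P', (fun p => Xv p.1),
  (fun p => A1 p.1), (fun p => (A2 p.1, p.2)), (fun u => u), (fun u => u.1),
  (fun (u1 : Xh) (u2 : Xh * V) => u2.2 (u1, u2.1)).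
split.
- split; [exact: P'0 | exact: P'1].
- by move=> x; exact: (etrans (P'_law Xv x) (hl x)).
- rewrite ma in co *; split; lra.
- rewrite /expect; split.
  + by rewrite (P'_exp (fun w => d (Xv w) (A1 w))).
  + by rewrite (P'_exp (fun w => d (Xv w) (A2 w))).
  + rewrite (eq_bigr (fun p => P' p * d (Xv p.1) (B p.1))).
      by rewrite (P'_exp (fun w => d (Xv w) (B w))).
    move=> p _; have [->|nz] := eqVneq (P' p) 0; first by rewrite !mul0r.
    by rewrite /= supp.
Qed.

End Constr.

Definition mk5 {R : realType} (a b c e f : R) : 'rV[R]_5 :=
  \row_(k < 5) nth 0 [:: a; b; c; e; f] k.

Lemma coord_mk5 {R : realType} (a b c e f : R) k : (k < 5)%N ->
  Defs.coord (mk5 a b c e f) k = nth 0 [:: a; b; c; e; f] k.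
Proof. by move=> hk; rewrite /Defs.coord mxE inordK. Qed.

Lemma comb {R : realType} (r q1 q2 : 'rV[R]_5) (mu : R) :
  (forall k, (k < 5)%N -> Defs.coord r k =
     mu * Defs.coord q1 k + (1 - mu) * Defs.coord q2 k) ->
  r = mu *: q1 + (1 - mu) *: q2.
Proof.
move=> H; apply/rowP => j; rewrite !mxE.
have := H j (ltn_ord j); rewrite /Defs.coord !inord_val.
by rewrite (ord1 ord0) => ->.
Qed.

Lemma mutinf_pswap {R : realType} {Om A B C : finType} (P : Om -> R)
  (x : Om -> A) (a : Om -> B) (b : Om -> C) : (forall w, 0 <= P w) ->
  mutinf P x (fun w => (a w, b w)) = mutinf P x (fun w => (b w, a w)).
Proof.
move=> P0; rewrite !mutinfE // (ent_swap P a b); congr (_ - _).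
by apply: ent_eq => w w' _ _; rewrite !xpair_eqE;
  case: (x w == x w'); case: (a w == a w'); case: (b w == b w').
Qed.

Lemma mutinf_tswap {R : realType} {Om A B D : finType} (P : Om -> R)
  (x : Om -> A) (a b : Om -> B) (c : Om -> D) : (forall w, 0 <= P w) ->
  mutinf P x (fun w => (a w, b w, c w)) = mutinf P x (fun w => (b w, a w, c w)).
Proof.
move=> P0; rewrite !mutinfE //; congr (_ + _ - _);
  apply: ent_eq => w w' _ _; rewrite !xpair_eqE;
  case: (x w == x w'); case: (a w == a w'); case: (b w == b w');
  case: (c w == c w') => //.
Qed.

Lemma star_swap {R : realType} {X Xh : finType} (pX : X -> R)
  (d : X -> Xh -> R) (q q' : 'rV[R]_5) :
  Defs.coord q' 0 = Defs.coord q 1 -> Defs.coord q' 1 = Defs.coord q 0 ->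
  Defs.coord q' 2 = Defs.coord q 3 -> Defs.coord q' 3 = Defs.coord q 2 ->
  Defs.coord q' 4 = Defs.coord q 4 ->
  EGCstar_pre pX d q -> EGCstar_pre pX d q'.
Proof.
move=> e0 e1 e2 e3 e4.
case=> Om [U1 [U2 [P [Xv [X1 [X2 [phi1 [phi2 [phi12 [[P0 P1] hl [h0 h1 h2] [h3 h4 h5]]]]]]]]]]].
exists Om, U2, U1, P, Xv, X2, X1, phi2, phi1, (fun u2 u1 => phi12 u1 u2).
split => //; rewrite ?e0 ?e1 ?e2 ?e3 ?e4; split => //.
by rewrite -mutinf_pswap // (mutinf_sym P X2 X1) // [Defs.coord q 1 + _]addrC.
Qed.

Lemma egc_two {R : realType} {X Xh : finType} (pX : X -> R)
  (d : X -> Xh -> R) (r : 'rV[R]_5) : EGC_pre pX d r ->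
  exists mu q1 q2, [/\ 0 <= mu <= 1, EGCstar_pre pX d q1, EGCstar_pre pX d q2
     & r = mu *: q1 + (1 - mu) *: q2].
Proof.
case=> Om [P [Xv [A1 [A2 [B [[P0 P1] hl [h0 h1 h2] [h3 h4 h5]]]]]]].
have [w0 _] : exists w0 : Om, true.
  case: (pickP (fun _ : Om => true)) => [w _|none]; first by exists w.
  have : \sum_w P w = 0 by apply: big1 => w _; have := none w.
  by rewrite P1 => /eqP; rewrite oner_eq0.
move: h0 h1 h2.
set a := mutinf P Xv A1; set b := mutinf P Xv A2.
set c := mutinf P Xv (fun w => (A1 w, A2 w, B w)) + mutinf P A1 A2.
move=> h0 h1 h2.
have W1 := @witness R X Xh Om P Xv A1 A2 B (B w0) P0 P1 pX d hl.
have W2 : forall q : 'rV[R]_5, Defs.coord q 0 >= c - b -> Defs.coord q 1 >= b ->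
  Defs.coord q 2 >= expect P (fun w => d (Xv w) (A1 w)) ->
  Defs.coord q 3 >= expect P (fun w => d (Xv w) (A2 w)) ->
  Defs.coord q 4 >= expect P (fun w => d (Xv w) (B w)) ->
  EGCstar_pre pX d q.
  move=> q g0 g1 g2 g3 g4.
  apply: (@star_swap _ _ _ pX d (mk5 (Defs.coord q 1) (Defs.coord q 0)
     (Defs.coord q 3) (Defs.coord q 2) (Defs.coord q 4))); rewrite ?coord_mk5 //.
  apply: (@witness R X Xh Om P Xv A2 A1 B (B w0) P0 P1 pX d hl); rewrite ?coord_mk5 //=.
  by rewrite -mutinf_tswap // (mutinf_sym P A2 A1).
have r1 : r = 1 *: r + (1 - 1) *: r by rewrite subrr scale1r scale0r addr0.
have [hA|hA] := lerP (c - a) (Defs.coord r 1).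
  have sr : EGCstar_pre pX d r by apply: W1 => //; rewrite -/a.
  by exists 1, r, r; split => //; rewrite ler01 lexx.
have [hB|hB] := lerP (c - b) (Defs.coord r 0).
  have sr : EGCstar_pre pX d r by apply: W2.
  by exists 1, r, r; split => //; rewrite ler01 lexx.
move: h2; set S := Defs.coord r 0 + Defs.coord r 1 => h2.
have den : 0 < S - a - b by lra.
set mu := (S - b - Defs.coord r 0) / (S - a - b).
have hmu : mu * (S - a - b) = S - b - Defs.coord r 0.
  by rewrite /mu divfK // gt_eqF.
have mu0 : 0 <= mu by rewrite /mu divr_ge0 //; lra.
have mu1 : mu <= 1 by rewrite /mu ler_pdivrMr // mul1r; lra.
exists mu, (mk5 a (S - a) (Defs.coord r 2) (Defs.coord r 3) (Defs.coord r 4)),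
  (mk5 (S - b) b (Defs.coord r 2) (Defs.coord r 3) (Defs.coord r 4)).
split.
- by rewrite mu0 mu1.
- by apply: W1; rewrite ?coord_mk5 //= -/a -/c; lra.
- by apply: W2; rewrite ?coord_mk5 //=; lra.
- apply: comb => k hk; rewrite !coord_mk5 //.
  case: k hk => [|[|[|[|[|k]]]]] //= _.
  + transitivity (S - b - mu * (S - a - b)); first by rewrite hmu; ring.
    ring.
  + transitivity (S - (S - b - mu * (S - a - b))); first by rewrite hmu /S; ring.
    ring.
  + ring.
  + ring.
  + ring.
Qed.

From Stdlib Require Import ClassicalEpsilon.

Lemma split_l m n (i : 'I_m) : split (lshift n i) = inl i.
Proof. exact: (unsplitK (inl _ i)). Qed.
Lemma split_r m n (i : 'I_n) : split (rshift m i) = inr i.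
Proof. exact: (unsplitK (inr _ i)). Qed.

Lemma hull_mono {R : realType} (S S' : 'rV[R]_5 -> Prop) :
  (forall r, S r -> S' r) -> forall y, conv_hull S y -> conv_hull S' y.
Proof.
move=> H y [n [w [v [w0 w1 Sv ->]]]].
by exists n, w, v; split => // i; apply: H.
Qed.

Lemma hull2 {R : realType} (S S' : 'rV[R]_5 -> Prop) :
  (forall r, S r -> exists t : R * 'rV[R]_5 * 'rV[R]_5,
     [/\ 0 <= t.1.1 <= 1, S' t.1.2, S' t.2
       & r = t.1.1 *: t.1.2 + (1 - t.1.1) *: t.2]) ->
  forall y, conv_hull S y -> conv_hull S' y.
Proof.
move=> H y [n [w [v [w0 w1 Sv ->]]]].
pose t i := proj1_sig (constructive_indefinite_description _ (H _ (Sv i))).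
have tP : forall i, [/\ 0 <= (t i).1.1 <= 1, S' (t i).1.2, S' (t i).2
       & v i = (t i).1.1 *: (t i).1.2 + (1 - (t i).1.1) *: (t i).2].
  move=> i; exact: (proj2_sig (constructive_indefinite_description _ (H _ (Sv i)))).
exists (n + n)%N,
  (fun k => match split k with inl i => w i * (t i).1.1
                             | inr i => w i * (1 - (t i).1.1) end),
  (fun k => match split k with inl i => (t i).1.2 | inr i => (t i).2 end).
split.
- move=> k; case: (split k) => i; have [/andP [m0 m1] _ _ _] := tP i;
    apply: mulr_ge0 => //; by rewrite subr_ge0.
- rewrite big_split_ord /=.
  under eq_bigr do rewrite split_l.
  under [X in _ + X]eq_bigr do rewrite split_r.
  rewrite -big_split /= -[RHS]w1; apply: eq_bigr => i _; ring.
- by move=> k; case: (split k) => i; have [_ ? ? _] := tP i.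
- rewrite [RHS]big_split_ord /=.
  under [X in _ = X + _]eq_bigr do rewrite !split_l.
  under [X in _ = _ + X]eq_bigr do rewrite !split_r.
  rewrite -big_split /=; apply: eq_bigr => i _.
  have [_ _ _ ->] := tP i.
  by rewrite scalerDr !scalerA.
Qed.

Theorem theorem1 (R : realType) (X Xh : finType) (pX : X -> R)
  (d : X -> Xh -> R) (hpX : is_pmf pX) (hd : forall x y, 0 <= d x y) :
  forall r : 'rV[R]_5, RD_EGCstar pX d r <-> RD_EGC pX d r.
Proof.
move=> r; split => h eps he; have [y [hy hc]] := h eps he; exists y; split => //.
  by apply: (hull_mono _ _ _ y hy) => q; exact: star_to_egc.
apply: (hull2 _ _ _ y hy) => q hq.
have [mu [q1 [q2 [m s1 s2 e]]]] := egc_two _ _ _ hq.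
by exists (mu, q1, q2).
Qed.
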